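(* Let $\mathbf{A}\in\mathbb{R}^{m\times n}$ have rows $\mathbf{a}_1^\mathsf{T},\dots,\mathbf{a}_m^\mathsf{T}$ and let $\lambda>\max_l\|\mathbf{a}_l\|_\infty$. Then every stationary point $\hat{\boldsymbol{x}}$ of $$\text{(P}_\lambda\text{)}\quad \min_{\boldsymbol{x}\in[-1,1]^n}\ \max_{l\in\{1,\dots,m\}}\mathbf{a}_l^\mathsf{T}\boldsymbol{x}-\lambda\|\boldsymbol{x}\|_1$$ satisfies $\hat{x}_i\in\{-1,0,1\}$ for all $i=1,\dots,n$.
   Context: A point $\hat{\boldsymbol{x}}\in[-1,1]^n$ is a stationary point of (P$_\lambda$) if there exist $\mathbf{u},\mathbf{v}\in\mathbb{R}^n_{+}$ such that $\mathbf{0}\in\partial\big(\max_l\mathbf{a}_l^\mathsf{T}\hat{\boldsymbol{x}}\big)-\lambda\,\partial\|\hat{\boldsymbol{x}}\|_1-\mathbf{u}+\mathbf{v}$ and $u_i(\hat{x}_i+1)=0$, $v_i(\hat{x}_i-1)=0$ for all $i$, where $\partial$ denotes the convex subdifferential of the convex functions $\boldsymbol{x}\mapsto\max_l\mathbf{a}_l^\mathsf{T}\boldsymbol{x}$ and $\boldsymbol{x}\mapsto\|\boldsymbol{x}\|_1$ (a set sum/difference of sets). *)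

(* Defs.v *)
(* Vectors in R^n are functions 'I_n -> R; A is an
   (m.+1) x n real matrix (m.+1 >= 1 rows, so max_l is well defined). *)
From HB Require Import structures.
From mathcomp Require Import all_boot all_order all_algebra.
From mathcomp Require Import reals.
Set Implicit Arguments. Unset Strict Implicit. Unset Printing Implicit Defensive.
Import Order.TTheory GRing.Theory Num.Theory.
Local Open Scope ring_scope.

Section Defs.
Variable R : realType.

Definition dotv n (g x : 'I_n -> R) : R := \sum_(i < n) g i * x i.

Definition norm1 n (x : 'I_n -> R) : R := \sum_(i < n) `|x i|.

Definition norminf n (x : 'I_n -> R) : R := \big[Num.max/0]_(i < n) `|x i|.

Definition subdiff n (f : ('I_n -> R) -> R) (x g : 'I_n -> R) : Prop :=
  forall y : 'I_n -> R, f x + dotv g (fun i => y i - x i) <= f y.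

Definition maxlin m n (A : 'M[R]_(m.+1, n)) (x : 'I_n -> R) : R :=
  \big[Num.max/ dotv (fun j => A ord0 j) x]_(l < m.+1) dotv (fun j => A l j) x.

Definition stationary m n (A : 'M[R]_(m.+1, n)) (lam : R) (x : 'I_n -> R) : Prop :=
  (forall i, -1 <= x i <= 1) /\
  exists (u v g h : 'I_n -> R),
    (forall i, 0 <= u i /\ 0 <= v i) /\
    subdiff (maxlin A) x g /\
    subdiff (@norm1 n) x h /\
    (forall i, g i - lam * h i - u i + v i = 0) /\
    (forall i, u i * (x i + 1) = 0 /\ v i * (x i - 1) = 0).
End Defs.

(* Main.v *)
Require Import Defs.
From HB Require Import structures.
From mathcomp Require Import all_boot all_order all_algebra.
From mathcomp Require Import reals.
From mathcomp Require Import lra.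
Import Order.TTheory GRing.Theory Num.Theory.
Local Open Scope ring_scope.

Set Implicit Arguments. Unset Strict Implicit.
Section Aux.
Variable R : realType.

Definition bmpv n (x : 'I_n -> R) (i : 'I_n) (t : R) : 'I_n -> R :=
  fun j => x j + (if j == i then t else 0).

Lemma dotv_bmpv n (g x : 'I_n -> R) i t :
  dotv g (fun j => bmpv x i t j - x j) = g i * t.
Proof.
rewrite /dotv /bmpv.
rewrite (eq_bigr (fun j => if j == i then g j * t else 0)); last first.
  by move=> j _; rewrite addrC addKr; case: eqP => _; rewrite ?mulr0.
by rewrite -big_mkcond big_pred1_eq.
Qed.

Lemma dotv_bmpv2 n (g x : 'I_n -> R) i t :
  dotv g (bmpv x i t) = dotv g x + g i * t.
Proof.
rewrite -(dotv_bmpv g x i t) /dotv -big_split /=.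
by apply: eq_bigr => j _; rewrite -mulrDr addrC subrK.
Qed.

Lemma norm1_bmpv n (x : 'I_n -> R) i t :
  norm1 (bmpv x i t) - norm1 x = `|x i + t| - `|x i|.
Proof.
rewrite /norm1 -sumrB.
rewrite (eq_bigr (fun j => if j == i then `|x i + t| - `|x i| else 0)); last first.
  by move=> j _; rewrite /bmpv; case: eqP => [->|_]; rewrite ?addr0 ?subrr.
by rewrite -big_mkcond big_pred1_eq.
Qed.

Lemma bigmax_le_seq (I : eqType) (r : seq I) (F : I -> R) s l0 :
  l0 \in r -> F l0 <= \big[Num.max/s]_(l <- r) F l.
Proof.
elim: r => [//|a r IH]; rewrite inE big_cons => /orP [/eqP->|H].
  by rewrite le_max lexx.
by rewrite le_max (IH H) orbT.
Qed.

Lemma bigmax_attained m (F : 'I_m.+1 -> R) :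
  exists l, \big[Num.max/F ord0]_(l < m.+1) F l = F l.
Proof.
apply: (big_ind (fun z => exists l, z = F l)); first by exists ord0.
  move=> a b [la ->] [lb ->]; rewrite /Num.max.
  by case: ifP => _; [exists lb | exists la].
by move=> l _; exists l.
Qed.

End Aux.

Theorem theorem6 (R : realType) (m n : nat) (A : 'M[R]_(m.+1, n)) (lam : R)
  (hlam : forall l : 'I_m.+1, norminf (fun j => A l j) < lam)
  (x : 'I_n -> R) (hx : stationary A lam x) :
  forall i : 'I_n, x i = -1 \/ x i = 0 \/ x i = 1.
Proof.
move=> i.
case: hx => hb [u [v [g [h [huv [hg [hh [heq hc]]]]]]]].
have [->|xm1] := eqVneq (x i) (-1); first by left.
have [->|x0] := eqVneq (x i) 0; first by right; left.
have [->|x1] := eqVneq (x i) 1; first by right; right.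
exfalso.
have u0 : u i = 0.
  case: (hc i) => /eqP; rewrite mulf_eq0 => /orP [/eqP//|]; rewrite addr_eq0.
  by rewrite (negbTE xm1).
have v0 : v i = 0.
  case: (hc i) => _ /eqP; rewrite mulf_eq0 => /orP [/eqP//|]; rewrite subr_eq0.
  by rewrite (negbTE x1).
have gi : g i = lam * h i by move: (heq i); rewrite u0 v0 subr0 addr0 => /eqP; rewrite subr_eq0 => /eqP.
have Abnd : forall l, `|A l i| < lam.
  move=> l; apply: le_lt_trans (hlam l); rewrite /norminf.
  exact: (bigmax_le_seq (fun j : 'I_n => `|A l j|) 0 (mem_index_enum i)).
have lam0 : 0 < lam by apply: le_lt_trans (Abnd ord0).
have gb : forall t : R, (t = 1 \/ t = -1) -> g i * t < lam.
  move=> t ht.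
  have := hg (bmpv x i t); rewrite dotv_bmpv /maxlin.
  have [l ->] := bigmax_attained (fun l : 'I_m.+1 => dotv (fun j => A l j) (bmpv x i t)).
  rewrite dotv_bmpv2 => H.
  have Hl : dotv (fun j => A l j) x <= maxlin A x.
    exact: (bigmax_le_seq (fun l : 'I_m.+1 => dotv (fun j => A l j) x) _ (mem_index_enum l)).
  have : g i * t <= A l i * t.
    rewrite -(lerD2l (maxlin A x)); apply: (le_trans H); rewrite lerD2r //.
  move=> H2; apply: le_lt_trans H2 _.
  apply: le_lt_trans (Abnd l); case: ht => ->; rewrite ?mulr1 ?mulrN1 ?ler_norm //.
  by rewrite -normrN ler_norm.
have g1 := gb 1 (or_introl erefl); have g2 := gb (-1) (or_intror erefl).
rewrite mulr1 in g1; rewrite mulrN1 in g2.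
have hA := hh (bmpv x i (- x i)); have hB := hh (bmpv x i (x i)).
rewrite dotv_bmpv -lerBrDl norm1_bmpv subrr normr0 add0r in hA.
rewrite dotv_bmpv -lerBrDl norm1_bmpv in hB.
have hx2 : h i * x i = `|x i|.
  apply/eqP; rewrite eq_le; apply/andP; split.
    move: hB; rewrite -mulr2n normrMn mulr2n; lra.
  move: hA; rewrite mulrN; lra.
have hi1 : `|h i| = 1.
  have : `|h i| * `|x i| = 1 * `|x i| by rewrite -normrM hx2 normr_id mul1r.
  by move/(mulIf _); apply; rewrite normr_eq0.
have : `|g i| = lam by rewrite gi normrM hi1 mulr1 gtr0_norm.
have : `|g i| < lam by rewrite ltr_norml g1 andbT ltrNl.
by move=> + E; rewrite E ltxx.
Qed.
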